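(* Let $m\ge2$ and $G=CK(2m-1)$. Every set of edges $B\subset E(G)$ of Class A is a blocker for the simple Hamiltonian paths of $G$.
   Context: $CK(2m-1)$ is the complete convex geometric graph on $2m-1$ points in convex position, labelled clockwise $0,\dots,2m-2$ (elements of $\mathbb{Z}_{2m-1}$; indices mod $2m-1$), with all segments as edges. A simple Hamiltonian path (SHP) is a path through all vertices whose edges pairwise do not cross; a blocker for SHPs is an edge set of smallest possible size (which is $m$) sharing an edge with every SHP. Class A (up to cyclic rotation $x\mapsto x+k$ of labels): sets consisting of the following edges, for integers $\alpha,\delta\ge0$ with $\alpha+\delta\le m-2$: (1) all edges of the boundary path $\langle\alpha,\alpha+1,\dots,m-\delta\rangle$; (2) the edges $[i-1-\epsilon_i,\,i+\epsilon_i]$, $1\le i\le\alpha$, with $\epsilon_1>\dots>\epsilon_\alpha>0$ and $\alpha-i+1\le\epsilon_i\le m-\delta-i-1$; (3) the edges $[m-j-\xi_j,\,m-j+1+\xi_j]$, $1\le j\le\delta$, with $\xi_1>\dots>\xi_\delta>0$ and $\delta+1-j\le\xi_j\le m-j-\alpha-1$; and in addition $\epsilon_1+\xi_1\le m-2$ (when $\alpha,\delta>0$). *)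

(* Defs.v *)
From mathcomp Require Import all_boot all_order all_algebra.
Set Implicit Arguments. Unset Strict Implicit. Unset Printing Implicit Defensive.
Import GRing.Theory Num.Theory.
Local Open Scope ring_scope.

(* Vertices of CK(N) with N = n.+1 points in convex position, labelled
   clockwise 0..n : the type 'I_n.+1.  For CK(2m-1) we take n = 2m-2. *)

Definition vmod (n : nat) (z : int) : 'I_n.+1 :=
  inord (absz (z %% (n.+1)%:Z)%Z).

Definition seg (n : nat) (a b : int) : {set 'I_n.+1} := [set vmod n a; vmod n b].

(* Two segments [a,b], [c,d] between points in convex position cross iff
   their four endpoints are distinct and exactly one of c,d lies strictly
   between a and b in the cyclic (= linear) order of the labels. *)
Definition cross (n : nat) (a b c d : 'I_n.+1) : bool :=
  let inside (x : 'I_n.+1) := (minn a b < x < maxn a b)%N in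
  [&& uniq [:: a; b; c; d] & inside c != inside d].

Definition path_pairs (n : nat) (p : seq 'I_n.+1) : seq ('I_n.+1 * 'I_n.+1) :=
  zip p (behead p).

Definition path_edges (n : nat) (p : seq 'I_n.+1) : {set {set 'I_n.+1}} :=
  [set:: [seq [set e.1; e.2] | e <- path_pairs p]].

Definition SHP (n : nat) (p : seq 'I_n.+1) : bool :=
  [&& uniq p, size p == n.+1 &
      all (fun e => all (fun f => ~~ cross e.1 e.2 f.1 f.2) (path_pairs p))
          (path_pairs p)].

Definition edge_set (n : nat) (B : {set {set 'I_n.+1}}) : Prop :=
  forall e, e \in B -> #|e| = 2%N.

Definition hits_all_SHP (n : nat) (B : {set {set 'I_n.+1}}) : Prop :=
  forall p : seq 'I_n.+1, SHP p -> exists2 e, e \in path_edges p & e \in B.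

Definition blocker (n : nat) (B : {set {set 'I_n.+1}}) : Prop :=
  [/\ edge_set B, hits_all_SHP B &
      forall B' : {set {set 'I_n.+1}}, edge_set B' -> hits_all_SHP B' -> (#|B| <= #|B'|)%N].

(* The Class A edge set with parameters alpha, delta, eps, xi (eps i, xi j
   meaningful for 1 <= i <= alpha, 1 <= j <= delta), rotated by k,
   in CK(2m-1) (vertex type 'I_(2m-2).+1). *)
Definition classA_set (m : nat) (k : int) (alpha delta : nat) (eps xi : nat -> nat)
  : {set {set 'I_(2 * m - 2).+1}} :=
  let E (a b : int) := seg (2 * m - 2) (a + k) (b + k) in
  [set:: [seq E j%:Z (j.+1)%N%:Z | j <- iota alpha (m - delta - alpha)]
      ++ [seq E (i%:Z - 1 - (eps i)%:Z) (i%:Z + (eps i)%:Z) | i <- iota 1 alpha]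
      ++ [seq E (m%:Z - j%:Z - (xi j)%:Z) (m%:Z - j%:Z + 1 + (xi j)%:Z)
         | j <- iota 1 delta]].

(* Class A membership (conditions of the paper, written over int to avoid
   truncated subtraction). *)
Definition classA (m : nat) (B : {set {set 'I_(2 * m - 2).+1}}) : Prop :=
  exists (k : int) (alpha delta : nat) (eps xi : nat -> nat),
    [/\ (alpha + delta <= m - 2)%N,
        (forall i, (1 <= i)%N -> (i < alpha)%N -> (eps i.+1 < eps i)%N) &
        (forall j, (1 <= j)%N -> (j < delta)%N -> (xi j.+1 < xi j)%N)] /\
    [/\
        (forall i, (1 <= i <= alpha)%N ->
           [/\ (0 < eps i)%N,
               alpha%:Z - i%:Z + 1 <= (eps i)%:Z &
               (eps i)%:Z <= m%:Z - delta%:Z - i%:Z - 1]),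
        (forall j, (1 <= j <= delta)%N ->
           [/\ (0 < xi j)%N,
               delta%:Z + 1 - j%:Z <= (xi j)%:Z &
               (xi j)%:Z <= m%:Z - j%:Z - alpha%:Z - 1]),
        ((0 < alpha)%N -> (0 < delta)%N -> (eps 1 + xi 1 <= m - 2)%N) &
        B = classA_set m k alpha delta eps xi].

(* Main.v *)
Require Import Defs.
From mathcomp Require Import all_boot all_order all_algebra.
From mathcomp Require Import zify.
Set Implicit Arguments. Unset Strict Implicit. Unset Printing Implicit Defensive.
Import GRing.Theory Num.Theory.
Local Open Scope ring_scope.

Lemma mulN_ge (N d : int) (hN : 0 < N) : 0 < d -> N <= d * N.
Proof. move=> hd. rewrite -{1}(mul1r N) ler_pM2r //. Qed.

Lemma mulN_cases (N d : int) : 0 < N -> [\/ d = 0, N <= d * N | d * N <= - N].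
Proof.
move=> hN. case: (ltrgt0P d) => hd.
- apply: Or32. exact: mulN_ge.
- apply: Or33. have := @mulN_ge N (-d) hN. rewrite oppr_gt0 => /(_ hd). rewrite mulNr. lia.
- by apply: Or31.
Qed.

Definition res (N z : int) : nat := absz (z %% N)%Z.

Lemma resE (N z : int) : 0 < N -> (res N z)%:Z = (z %% N)%Z.
Proof. move=> hN. rewrite /res gez0_abs // modz_ge0 //. exact: lt0r_neq0. Qed.

Lemma res_lt (N z : int) : 0 < N -> (res N z)%:Z < N.
Proof. move=> hN. rewrite resE //. exact: ltz_pmod. Qed.

Lemma res_decomp (N z : int) : 0 < N -> z = (z %/ N)%Z * N + (res N z)%:Z.
Proof. move=> hN. rewrite resE //. exact: divz_eq. Qed.

Lemma res_shift (N z c : int) : res N (z + c * N) = res N z.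
Proof. by rewrite /res addrC modzMDl. Qed.

Lemma res_small (N z : int) : 0 <= z < N -> (res N z)%:Z = z.
Proof. move=> h. have hN : 0 < N by lia. rewrite resE // modz_small //. Qed.

Lemma res_small2 (N z : int) : N <= z < N + N -> (res N z)%:Z = z - N.
Proof.
move=> h. have hN : 0 < N by lia.
have -> : z = (z - N) + 1 * N by rewrite mul1r subrK.
rewrite res_shift res_small; lia.
Qed.

Lemma res_eq (N a b : int) : 0 < N -> res N a = res N b ->
  exists c : int, a = b + c * N.
Proof.
move=> hN e. exists ((a %/ N)%Z - (b %/ N)%Z).
rewrite {1}(res_decomp a hN) {1}(res_decomp b hN) e mulrBl. lia.
Qed.

Lemma res_eq_win (N a b : int) : 0 < N -> res N a = res N b -> a - N < b -> b < a + N -> a = b.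
Proof.
move=> hN /(res_eq hN) [c ->] h1 h2.
case: (mulN_cases c hN) => [->|h|h]; lia.
Qed.

Lemma res_lift (N lo : int) (x : nat) : 0 < N -> (x%:Z < N) ->
  exists y, [/\ lo <= y, y < lo + N & res N y = x].
Proof.
move=> hN hx. exists (x%:Z - ((x%:Z - lo) %/ N)%Z * N). split.
- have := divz_eq (x%:Z - lo) N. have := modz_ge0 (x%:Z - lo) (lt0r_neq0 hN). lia.
- have := divz_eq (x%:Z - lo) N. have := ltz_pmod (x%:Z - lo) hN. lia.
- rewrite -mulNr res_shift. have h : (res N x%:Z)%:Z = x%:Z by apply: res_small; lia. lia.
Qed.
Definition growth (Nn : nat) (P lo hi : nat -> int) : Prop :=
  [/\ lo 0%N = P 0%N, hi 0%N = P 0%N &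
  forall t, (t.+1 < Nn)%N ->
    (P t.+1 = hi t + 1 /\ hi t.+1 = hi t + 1 /\ lo t.+1 = lo t) \/
    (P t.+1 = lo t - 1 /\ lo t.+1 = lo t - 1 /\ hi t.+1 = hi t)].

Section Growth.
Variables (Nn : nat) (P lo hi : nat -> int).
Hypothesis hg : growth Nn P lo hi.

Lemma g_len t : (t < Nn)%N -> hi t - lo t = t%:Z.
Proof.
case: hg => h0 h1 hs. elim: t => [|t IH] ht; first by rewrite h0 h1; lia.
have := IH (ltnW ht). case: (hs t ht); lia.
Qed.

Lemma g_mono i t : (i <= t)%N -> (t < Nn)%N -> lo t <= lo i /\ hi i <= hi t.
Proof.
case: hg => h0 h1 hs. move=> hit. elim: t hit => [|t IH] hit ht.
  by rewrite leqn0 in hit; move/eqP: hit => ->; lia.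
case: (ltngtP i t.+1) hit => // [hlt|->] _; last by lia.
have := IH hlt (ltnW ht). case: (hs t ht); lia.
Qed.

Lemma g_end t : (t < Nn)%N -> P t = lo t \/ P t = hi t.
Proof. case: hg => h0 h1 hs. case: t => [|t] ht; first by lia. case: (hs t ht); lia. Qed.

Lemma g_in i t : (i <= t)%N -> (t < Nn)%N -> lo t <= P i <= hi t.
Proof.
move=> hit ht. have hi' : (i < Nn)%N by apply: leq_ltn_trans ht.
have := g_mono hit ht. have := g_end hi'. have := g_len hi'. lia.
Qed.

Lemma g_inj i t : (i < t)%N -> (t < Nn)%N -> P i <> P t.
Proof.
case: hg => h0 h1 hs. case: t => // t hit ht.
have := g_in (i:=i) (t:=t) hit (ltnW ht). case: (hs t ht); lia.
Qed.

Lemma g_P0lo t : (t < Nn)%N -> lo t <= P 0%N <= hi t.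
Proof. move=> ht. exact: g_in. Qed.

Lemma g_time t : (t < Nn)%N -> forall y, hi 0%N < y -> y <= hi t ->
  exists tau, [/\ (0 < tau <= t)%N, P tau = y, hi tau.-1 = y - 1, hi tau = y & lo tau = lo tau.-1].
Proof.
case: hg => h0 h1 hs. elim: t => [|t IH] ht y hy1 hy2; first by lia.
have [hle|hgt] := lerP y (hi t).
  have [tau [h1' h2' h3' h4' h5']] := IH (ltnW ht) y hy1 hle.
  exists tau; split => //. by case/andP: h1' => -> /= /leqW.
exists t.+1; case: (hs t ht) => [[e1 [e2 e3]]|[e1 [e2 e3]]]; last by lia.
split=> //=; lia.
Qed.

End Growth.


Definition cong (N x y : int) := exists c : int, x = y + c * N.
Definition hitp (N x y a b : int) := (cong N x a /\ cong N y b) \/ (cong N x b /\ cong N y a).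

Definition bad (m al de : nat) (ep xi : nat -> nat) (x y : int) : Prop :=
  let N := (2 * m - 1)%N%:Z in
  (exists j : int, al%:Z <= j /\ j < m%:Z - de%:Z /\ hitp N x y j (j + 1)) \/
  (exists i : nat, (1 <= i <= al)%N /\ hitp N x y (i%:Z - 1 - (ep i)%:Z) (i%:Z + (ep i)%:Z)) \/
  (exists j : nat, (1 <= j <= de)%N /\
     hitp N x y (m%:Z - j%:Z - (xi j)%:Z) (m%:Z - j%:Z + 1 + (xi j)%:Z)).

Definition CA (m al de : nat) (ep xi : nat -> nat) : Prop :=
  [/\ (al + de <= m - 2)%N,
      (forall i, (1 <= i)%N -> (i < al)%N -> (ep i.+1 < ep i)%N),
      (forall j, (1 <= j)%N -> (j < de)%N -> (xi j.+1 < xi j)%N)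
      & (forall i, (1 <= i <= al)%N ->
         al%:Z - i%:Z + 1 <= (ep i)%:Z /\ (ep i)%:Z <= m%:Z - de%:Z - i%:Z - 1)] /\
      ((forall j, (1 <= j <= de)%N ->
         de%:Z + 1 - j%:Z <= (xi j)%:Z /\ (xi j)%:Z <= m%:Z - j%:Z - al%:Z - 1) /\
      ((0 < al)%N -> (0 < de)%N -> (ep 1 + xi 1 <= m - 2)%N)).

Lemma cong0 N x : cong N x x.
Proof. exists 0; lia. Qed.

Lemma congE N x y c : x = y + c * N -> cong N x y.
Proof. by exists c. Qed.

Lemma cong0' N x y : x = y -> cong N x y.
Proof. move=> ->; exact: cong0. Qed.

Lemma qbad m al de ep xi x y (j : int) :
  al%:Z <= j -> j < m%:Z - de%:Z ->
  hitp (2 * m - 1)%N%:Z x y j (j + 1) -> bad m al de ep xi x y.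
Proof. move=> h1 h2 h3. left. by exists j. Qed.

Lemma stair m al de ep xi P lo hi :
  (2 <= m)%N -> CA m al de ep xi -> growth (2 * m - 1) P lo hi ->
  P 0%N <= al%:Z -> al%:Z + (m - de - al)%N%:Z - 1 <= hi (2 * m - 2)%N ->
  (forall t, (t.+1 < 2 * m - 1)%N -> ~ bad m al de ep xi (P t) (P t.+1)) -> False.
Proof.
move=> hm [[c1 c2 c3 c4] [c5 c6]] hg hs hR nb.
have [h0 h1 hst] := hg.
set Nn := (2 * m - 1)%N in hg nb hst.
set N := (2 * m - 1)%N%:Z.
have hN : N = 2 * m%:Z - 1 by rewrite /N; lia.
have hlast : (2 * m - 2 < Nn)%N by rewrite /Nn; lia.
set R := hi (2 * m - 2)%N in hR.
have hLR : R - lo (2 * m - 2)%N = 2 * m%:Z - 2 by have := g_len hg hlast; rewrite /R; lia.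
set s := P 0%N in hs.
set q : int := (m - de - al)%N%:Z in hR.
have hq : q = m%:Z - de%:Z - al%:Z by rewrite /q; lia.
pose T := if al%:Z + q <= R then al%:Z + q else R.
have hT : al%:Z + q - 1 <= T <= al%:Z + q /\ T <= R /\ (T = al%:Z + q \/ (T = R /\ R = al%:Z + q - 1)).
  rewrite /T; case: ifP => H; lia.
clearbody T.
pose Arel (r x : int) := exists tau : nat, [/\ (0 < tau < Nn)%N, P tau = r, P tau.-1 = x,
   hi tau.-1 = r - 1 & [/\ lo tau.-1 = x, hi tau = r, lo tau = x & x < s]].
have nbt : forall t, (0 < t < Nn)%N -> ~ bad m al de ep xi (P t.-1) (P t).
  move=> t /andP [ht1 ht2] H. apply: (nb t.-1); first by lia.
  by rewrite prednK.
have Fex : forall r, al%:Z + 1 <= r <= T -> exists x, Arel r x.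
  move=> r hr.
  have [tau [ht1 ht2 ht3 ht4 ht5]] := g_time hg hlast (y:=r) ltac:(lia) ltac:(lia).
  have htN : (0 < tau < Nn)%N by lia.
  have hlen := g_len hg (t:=tau.-1) ltac:(lia).
  have [e|[e ne]] : P tau.-1 = r - 1 \/ (P tau.-1 = lo tau.-1 /\ P tau.-1 <> r - 1).
    have := g_end hg (t:=tau.-1) ltac:(lia). lia.
  - exfalso. apply: (nbt tau htN). apply: (@qbad _ _ _ _ _ _ _ (r - 1)); [lia|lia|].
    left; split; apply: (@congE _ _ _ 0); rewrite ?e ?ht2; lia.
  - have hne : (0 < tau.-1)%N.
      case: (posnP tau.-1) => // H0. exfalso. move: hlen ht3. rewrite H0 /=. rewrite H0 in e ne. lia.
    have hi1 := g_inj hg hne (t:=tau.-1) ltac:(lia).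
    have hi2 := g_mono hg (i:=0) (t:=tau.-1) ltac:(lia) ltac:(lia).
    exists (P tau.-1), tau. split; [exact htN|exact ht2|done|exact ht3|split].
    + by rewrite e.
    + exact ht4.
    + by rewrite ht5 e.
    + rewrite /s; lia.
have Funiq : forall r x x', Arel r x -> Arel r x' -> x = x'.
  move=> r x x' [t [ht e1 e2 _ _]] [t' [ht' e1' e2' _ _]].
  have ett : t = t'.
    case: (ltngtP t t') => // h; exfalso.
    - by apply: (g_inj hg h); [lia| rewrite e1 e1'].
    - by apply: (g_inj hg h); [lia| rewrite e1 e1'].
  by rewrite -e2 -e2' ett.
have F2 : forall r x, al%:Z + 1 <= r -> r <= al%:Z + q - 1 -> r <= T -> Arel r x ->
    exists tau : nat, [/\ (0 < tau)%N, (tau.+1 < Nn)%N, P tau = r, P tau.+1 = x - 1 &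
                        [/\ lo tau.+1 = x - 1, hi tau = r & hi tau.-1 = r - 1]].
  move=> r x hr1 hr2 hr3 [t [ht e1 e2 e3 [e4 e5 e6 e7]]].
  have ht1 : (t.+1 < Nn)%N.
    have [hlt|hge] := ltrP r R.
    - have [t' [ht'1 ht'2 ht'3 ht'4 ht'5]] := g_time hg hlast (y:=r+1) ltac:(lia) ltac:(lia).
      have : (t <= t'.-1)%N.
        rewrite leqNgt; apply/negP => H.
        have := g_mono hg (i:=t'.-1) (t:=t.-1) ltac:(lia) ltac:(lia). lia.
      lia.
    - case: (ltngtP t.+1 Nn) => //; first by lia. move=> eN; exfalso.
      have hlen := g_len hg (t:=t.-1) ltac:(lia).
      have ett : t.-1 = (2 * m - 3)%N by lia.
      rewrite ett in hlen e3 e4.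
      apply: (nbt t ltac:(lia)). rewrite e1 e2.
      apply: (@qbad _ _ _ _ _ _ _ r); [lia|lia|].
      right; split; [apply: (@congE _ _ _ (-1))|apply: cong0]; lia.
  have hs1 := hst t ht1.
  have [e8 e9] : P t.+1 = x - 1 /\ lo t.+1 = x - 1.
    case: hs1 => [[f1 [f2 f3]]|[f1 [f2 f3]]]; last by lia.
    exfalso. apply: (nb t ht1). rewrite e1 f1 e5.
    apply: (@qbad _ _ _ _ _ _ _ r); [lia|lia|].
    left; split; apply: cong0.
  exists t; split => //; lia.
have F3 : forall r x x', al%:Z + 1 <= r -> r + 1 <= T -> Arel r x -> Arel (r + 1) x' -> x' <= x - 1.
  move=> r x x' hr1 hr2 hA hA'.
  have hxs : x < s by move: (hA) => [? [? ? ? ? [? ? ? ?]]].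
  have [t [ht1 ht2 ht3 ht4 [ht5 ht6 ht7]]] := F2 r x hr1 ltac:(lia) ltac:(lia) hA.
  move: hA' => [t' [ht' e1 e2 e3 [e4 e5 e6 e7]]].
  have : (t.+1 < t')%N.
    case: (ltngtP t.+1 t') => // h; exfalso.
    - have := g_in hg (i:=t') (t:=t) ltac:(lia) ltac:(lia). lia.
    - rewrite -h ht4 in e1. lia.
  move=> h. have := g_mono hg (i:=t.+1) (t:=t'.-1) ltac:(lia) ltac:(lia). lia.
have F3' : forall r r' x x', al%:Z + 1 <= r -> r <= r' -> r' <= T -> Arel r x -> Arel r' x' ->
    r' + x' <= r + x.
  move=> r r' x x' hr1 hr2 hr3 hA hA'.
  have [k hk] : exists k : nat, r' = r + k%:Z by exists (absz (r' - r)); lia.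
  elim: k r' x' hk hr2 hr3 hA' => [|k IH] r' x' hk hr2 hr3 hA'.
    rewrite hk addr0 in hA'. rewrite (Funiq _ _ _ hA hA'); lia.
  have [x'' hA''] := Fex (r + k%:Z) ltac:(lia).
  have := IH (r + k%:Z) x'' erefl ltac:(lia) ltac:(lia) hA''.
  have := F3 (r + k%:Z) x'' x' ltac:(lia) ltac:(lia) hA''.
  rewrite -(_ : r' = r + k%:Z + 1); last by lia. move=> /(_ hA'). lia.
have F4 : forall x, Arel T x -> T + x >= 2 - 2 * de%:Z.
  move=> x hA. case: hT => [hT1 [hT2 [hT3|[hT3 hT4]]]].
  - move: (hA) => [t [ht e1 e2 e3 [e4 e5 e6 e7]]].
    have := g_mono hg (i:=t.-1) (t:=(2 * m - 2)%N) ltac:(lia) ltac:(lia). lia.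
  - have [t [ht1 ht2 ht3 ht4 [ht5 ht6 ht7]]] := F2 T x ltac:(lia) ltac:(lia) ltac:(lia) hA.
    have := g_in hg (i:=t.+1) (t:=(2 * m - 2)%N) ltac:(lia) ltac:(lia).
    move=> hin. have [hlt|hle] := ltrP (lo (2 * m - 2)%N) (x - 1); first by lia.
    exfalso. apply: (nb t ht2). rewrite ht3 ht4.
    apply: (@qbad _ _ _ _ _ _ _ T); [lia|lia|].
    left; split; [apply: cong0|apply: (@congE _ _ _ (-1))]; lia.
have E1 : forall r x, Arel r x -> ~ bad m al de ep xi x r.
  move=> r x [t [ht e1 e2 _ _]]. rewrite -e1 -e2. exact: nbt.
have E2 : forall r x, al%:Z + 1 <= r -> r <= al%:Z + q - 1 -> r <= T -> Arel r x ->
    ~ bad m al de ep xi r (x - 1).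
  move=> r x g1 g2 g3 hA. have [t [ht1 ht2 ht3 ht4 _]] := F2 r x g1 g2 g3 hA.
  rewrite -ht3 -ht4. exact: nb.
pose W (i : nat) := i%:Z + (ep i)%:Z.
have hW : forall i, (1 <= i <= al)%N -> al%:Z + 1 <= W i <= al%:Z + q - 1.
  move=> i hii. have := c4 i hii. rewrite /W; lia.
have LA : forall k i, (1 <= i <= al)%N -> (al - i = k)%N -> forall x, Arel (W i) x ->
    W i + x <= 2 * i%:Z - 2.
  elim=> [|k IH] i hii hk x hA.
  - have [x0 hA0] := Fex (al%:Z + 1) ltac:(lia).
    move: (hA0) => [t0 [_ _ _ _ [_ _ _ hx0]]].
    have := F3' (al%:Z + 1) (W i) x0 x ltac:(lia) ltac:(have := hW i hii; lia) ltac:(have := hW i hii; lia) hA0 hA.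
    move=> H.
    have [H1|H1] : W i + x <= 2 * i%:Z - 2 \/ W i + x = 2 * i%:Z - 1 \/ W i + x = 2 * i%:Z by lia.
      done.
    exfalso. case: H1 => H1.
    + apply: (E1 _ _ hA). right; left; exists i; split => //.
      left; split; apply: cong0'; rewrite /W in H1 *; lia.
    + apply: (E2 (W i) x ltac:(have := hW i hii; lia) ltac:(have := hW i hii; lia) ltac:(have := hW i hii; lia) hA).
      right; left; exists i; split => //.
      right; split; apply: cong0'; rewrite /W in H1 *; lia.
  - have hi1 : (1 <= i.+1 <= al)%N by lia.
    have [x1 hA1] := Fex (W i.+1) ltac:(have := hW _ hi1; lia).
    have hWW : W i.+1 <= W i by have := c2 i ltac:(lia) ltac:(lia); rewrite /W; lia.
    have := IH i.+1 hi1 ltac:(lia) x1 hA1.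
    have := F3' (W i.+1) (W i) x1 x ltac:(have := hW _ hi1; lia) hWW ltac:(have := hW i ltac:(lia); lia) hA1 hA.
    move=> Ha Hb.
    have [H1|H1] : W i + x <= 2 * i%:Z - 2 \/ W i + x = 2 * i%:Z - 1 \/ W i + x = 2 * i%:Z by lia.
      done.
    exfalso. case: H1 => H1.
    + apply: (E1 _ _ hA). right; left; exists i; split => //.
      left; split; apply: cong0'; rewrite /W in H1 *; lia.
    + apply: (E2 (W i) x ltac:(have := hW i hii; lia) ltac:(have := hW i hii; lia) ltac:(have := hW i hii; lia) hA).
      right; left; exists i; split => //.
      right; split; apply: cong0'; rewrite /W in H1 *; lia.
pose Lm (j : nat) := m%:Z - j%:Z - (xi j)%:Z.
have hL : forall j, (1 <= j <= de)%N -> al%:Z + 1 <= Lm j <= al%:Z + q - 1.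
  move=> j hj. have := c5 j hj. rewrite /Lm; lia.
have RA : forall k j, (1 <= j <= de)%N -> (de - j = k)%N -> forall x, Arel (Lm j) x ->
    Lm j + x >= 4 - 2 * j%:Z.
  elim=> [|k IH] j hj hk x hA.
  - have [xT hAT] := Fex T ltac:(lia).
    have := F4 xT hAT.
    have := F3' (Lm j) T x xT ltac:(have := hL j hj; lia) ltac:(have := hL j hj; lia) ltac:(lia) hA hAT.
    move=> Ha Hb.
    have [H1|H1] : Lm j + x >= 4 - 2 * j%:Z \/ Lm j + x = 2 - 2 * j%:Z \/ Lm j + x = 3 - 2 * j%:Z by lia.
      done.
    exfalso. case: H1 => H1.
    + apply: (E1 _ _ hA). right; right; exists j; split => //.
      right; split; [apply: (@congE _ _ _ (-1))|apply: cong0']; rewrite /Lm in H1 *; lia.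
    + apply: (E2 (Lm j) x ltac:(have := hL j hj; lia) ltac:(have := hL j hj; lia) ltac:(have := hL j hj; lia) hA).
      right; right; exists j; split => //.
      left; split; [apply: cong0'|apply: (@congE _ _ _ (-1))]; rewrite /Lm in H1 *; lia.
  - have hj1 : (1 <= j.+1 <= de)%N by lia.
    have [x1 hA1] := Fex (Lm j.+1) ltac:(have := hL _ hj1; lia).
    have hLL : Lm j <= Lm j.+1 by have := c3 j ltac:(lia) ltac:(lia); rewrite /Lm; lia.
    have := IH j.+1 hj1 ltac:(lia) x1 hA1.
    have := F3' (Lm j) (Lm j.+1) x x1 ltac:(have := hL _ hj; lia) hLL ltac:(have := hL _ hj1; lia) hA hA1.
    move=> Ha Hb.
    have [H1|H1] : Lm j + x >= 4 - 2 * j%:Z \/ Lm j + x = 2 - 2 * j%:Z \/ Lm j + x = 3 - 2 * j%:Z by lia.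
      done.
    exfalso. case: H1 => H1.
    + apply: (E1 _ _ hA). right; right; exists j; split => //.
      right; split; [apply: (@congE _ _ _ (-1))|apply: cong0']; rewrite /Lm in H1 *; lia.
    + apply: (E2 (Lm j) x ltac:(have := hL j hj; lia) ltac:(have := hL j hj; lia) ltac:(have := hL j hj; lia) hA).
      right; right; exists j; split => //.
      left; split; [apply: cong0'|apply: (@congE _ _ _ (-1))]; rewrite /Lm in H1 *; lia.
have [x0 hA0] := Fex (al%:Z + 1) ltac:(lia).
have hx0 : x0 < s by move: (hA0) => [? [? ? ? ? [? ? ? ?]]].
have [xT hAT] := Fex T ltac:(lia).
have hF4 := F4 xT hAT.
case: (posnP al) => hal; case: (posnP de) => hde.
- have := F3' (al%:Z + 1) T x0 xT ltac:(lia) ltac:(lia) ltac:(lia) hA0 hAT. lia.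
- have h1' : (1 <= 1 <= de)%N by lia.
  have [x' hA'] := Fex (Lm 1%N) ltac:(have := hL 1%N h1'; lia).
  have := RA (de - 1)%N 1%N h1' erefl x' hA'.
  have hl1 := hL 1%N h1'.
  have hle1 : al%:Z + 1 <= Lm 1%N by lia.
  have hle2 : Lm 1%N <= T by lia.
  have := F3' (al%:Z + 1) (Lm 1%N) x0 x' ltac:(lia) hle1 hle2 hA0 hA'. move=> H1 H2. lia.
- have h1' : (1 <= 1 <= al)%N by lia.
  have [x hA] := Fex (W 1%N) ltac:(have := hW 1%N h1'; lia).
  have := LA (al - 1)%N 1%N h1' erefl x hA.
  have := F3' (W 1%N) T x xT ltac:(have := hW 1%N h1'; lia) ltac:(have := hW 1%N h1'; lia) ltac:(lia) hA hAT. lia.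
- have h1' : (1 <= 1 <= al)%N by lia.
  have h1'' : (1 <= 1 <= de)%N by lia.
  have [x hA] := Fex (W 1%N) ltac:(have := hW 1%N h1'; lia).
  have [x' hA'] := Fex (Lm 1%N) ltac:(have := hL 1%N h1''; lia).
  have := LA (al - 1)%N 1%N h1' erefl x hA.
  have := RA (de - 1)%N 1%N h1'' erefl x' hA'.
  have hWL : W 1%N <= Lm 1%N by have := c6 hal hde; rewrite /W /Lm; lia.
  have := F3' (W 1%N) (Lm 1%N) x x' ltac:(have := hW 1%N h1'; lia) hWL ltac:(have := hL 1%N h1''; lia) hA hA'. lia.
Qed.




Lemma cong_shift N x a c : cong N (x + c * N) a -> cong N x a.
Proof. move=> [c1 h]. exists (c1 - c). lia. Qed.

Lemma cong_mir N (m : int) x a c : cong N (m - x + c * N) a -> cong N x (m - a).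
Proof. move=> [c1 h]. exists (c - c1). lia. Qed.

Lemma hitp_eq N x y a b a' b' : a = a' -> b = b' -> hitp N x y a b -> hitp N x y a' b'.
Proof. by move=> -> ->. Qed.

Lemma bad_shift m al de ep xi x y c :
  bad m al de ep xi (x + c * (2 * m - 1)%N%:Z) (y + c * (2 * m - 1)%N%:Z) -> bad m al de ep xi x y.
Proof.
rewrite /bad. set N := (2 * m - 1)%N%:Z.
have H : forall a b, hitp N (x + c * N) (y + c * N) a b -> hitp N x y a b.
  move=> a b [[h1 h2]|[h1 h2]]; [left|right]; split; apply: cong_shift; eassumption.
case=> [[j [h1 [h2 h3]]]|[[i [h1 h2]]|[j [h1 h2]]]].
- left; exists j; split => //; split => //; exact: H.
- right; left; exists i; split => //; exact: H.
- right; right; exists j; split => //; exact: H.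
Qed.

Lemma bad_mir m al de ep xi x y c : (1 <= m)%N ->
  bad m de al xi ep (m%:Z - x + c * (2 * m - 1)%N%:Z) (m%:Z - y + c * (2 * m - 1)%N%:Z) ->
  bad m al de ep xi x y.
Proof.
move=> hm. rewrite /bad. set N := (2 * m - 1)%N%:Z.
have H : forall a b, hitp N (m%:Z - x + c * N) (m%:Z - y + c * N) a b ->
    hitp N x y (m%:Z - b) (m%:Z - a).
  move=> a b [[h1 h2]|[h1 h2]]; [right|left]; split; apply: cong_mir; eassumption.
case=> [[j [h1 [h2 h3]]]|[[i [h1 h2]]|[j [h1 h2]]]].
- left; exists (m%:Z - j - 1); split; first by lia. split; first by lia.
  apply: (hitp_eq _ _ (H _ _ h3)); lia.
- right; right; exists i; split => //.
  apply: (hitp_eq _ _ (H _ _ h2)); lia.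
- right; left; exists j; split => //.
  apply: (hitp_eq _ _ (H _ _ h2)); lia.
Qed.

Lemma CA_mir m al de ep xi : CA m al de ep xi -> CA m de al xi ep.
Proof.
move=> [[c1 c2 c3 c4] [c5 c6]]. split; [split|split] => //.
- by rewrite addnC.
- move=> i hi. have := c5 i hi. lia.
- move=> j hj. have := c4 j hj. lia.
- move=> h1 h2. rewrite addnC. exact: c6.
Qed.

Lemma growth_shift Nn P lo hi (c : int) : growth Nn P lo hi ->
  growth Nn (fun t => P t + c) (fun t => lo t + c) (fun t => hi t + c).
Proof.
move=> [h0 h1 hs]. split => /=; [by rewrite h0|by rewrite h1|].
move=> t ht. case: (hs t ht) => [[e1 [e2 e3]]|[e1 [e2 e3]]]; [left|right]; lia.
Qed.

Lemma growth_mir Nn P lo hi (c : int) : growth Nn P lo hi ->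
  growth Nn (fun t => c - P t) (fun t => c - hi t) (fun t => c - lo t).
Proof.
move=> [h0 h1 hs]. split => /=; [by rewrite h1|by rewrite h0|].
move=> t ht. case: (hs t ht) => [[e1 [e2 e3]]|[e1 [e2 e3]]]; [right|left]; lia.
Qed.


Lemma core m al de ep xi P lo hi : (2 <= m)%N -> CA m al de ep xi -> growth (2 * m - 1) P lo hi ->
  (forall t, (t.+1 < 2 * m - 1)%N -> ~ bad m al de ep xi (P t) (P t.+1)) -> False.
Proof.
move=> hm hca hg nb.
have hca' := hca. move: hca' => [[c1 _ _ _] _].
set N := (2 * m - 1)%N%:Z.
have hN : N = 2 * m%:Z - 1 by rewrite /N; lia.
have hN0 : 0 < N by lia.
have hlast : (2 * m - 2 < 2 * m - 1)%N by lia.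
have hLR := g_len hg hlast.
set L := lo (2 * m - 2)%N in hLR. set R := hi (2 * m - 2)%N in hLR.
pose c := ((al%:Z - L) %/ N)%Z.
have hc : L + c * N <= al%:Z < L + c * N + N.
  have := divz_eq (al%:Z - L) N. have := modz_ge0 (al%:Z - L) (lt0r_neq0 hN0).
  have := ltz_pmod (al%:Z - L) hN0. rewrite /c. lia.
pose P' t := P t + c * N. pose lo' t := lo t + c * N. pose hi' t := hi t + c * N.
have hg' : growth (2 * m - 1) P' lo' hi' := growth_shift (c * N) hg.
have nb' : forall t, (t.+1 < 2 * m - 1)%N -> ~ bad m al de ep xi (P' t) (P' t.+1).
  move=> t ht H. apply: (nb t ht). exact: (bad_shift H).
have [h0 h1 hst] := hg'.
have hq : ((m - de - al)%N)%:Z = m%:Z - de%:Z - al%:Z by lia.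
set q := m%:Z - de%:Z - al%:Z in hq.
have hR' : hi' (2 * m - 2)%N = R + c * N by [].
have hL' : lo' (2 * m - 2)%N = L + c * N by [].
have first : forall j, (j = P' 0%N \/ j = P' 0%N + N) -> al%:Z + 1 <= j <= al%:Z + q - 1 -> False.
  move=> j hj hjr. have := hst 0%N ltac:(lia). rewrite h0 h1.
  case=> [[e1 _]|[e1 _]].
  - apply: (nb' 0%N ltac:(lia)). rewrite e1. apply: (@qbad _ _ _ _ _ _ _ j); [lia|lia|].
    case: hj => hj; left; split.
    + apply: cong0'; lia.
    + apply: cong0'; lia.
    + apply: (@congE _ _ _ (-1)); lia.
    + apply: (@congE _ _ _ (-1)); lia.
  - apply: (nb' 0%N ltac:(lia)). rewrite e1. apply: (@qbad _ _ _ _ _ _ _ (j - 1)); [lia|lia|].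
    case: hj => hj; right; split.
    + apply: cong0'; lia.
    + apply: cong0'; lia.
    + apply: (@congE _ _ _ (-1)); lia.
    + apply: (@congE _ _ _ (-1)); lia.
have hsLR := g_P0lo hg' hlast. rewrite hR' hL' in hsLR.
have stairP : P' 0%N <= al%:Z -> al%:Z + q - 1 <= R + c * N -> False.
  move=> hs hr. apply: (stair hm hca hg' hs) => //. rewrite hR' hq. done.
have stairM : forall k : int, m%:Z - P' 0%N + k * N <= de%:Z ->
    de%:Z + q - 1 <= m%:Z - (L + c * N) + k * N -> False.
  move=> k hs hr.
  have hgm := growth_mir (m%:Z + k * N) hg'.
  apply: (stair hm (CA_mir hca) hgm) => /=.
  - lia.
  - rewrite hL'. have -> : ((m - al - de)%N)%:Z = q by lia. lia.
  - move=> t ht H. apply: (nb' t ht). apply: (bad_mir (c := k)); first by lia.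
    have ez : forall z : int, m%:Z + k * N - z = m%:Z - z + k * N by move=> z; lia.
    by rewrite -!ez.
have [hA|hB] := lerP (al%:Z + q) (R + c * N).
-
  have [hs|hs] := lerP (P' 0%N) (al%:Z); first by apply: stairP; lia.
  have [hs2|hs2] := ltrP (P' 0%N) (al%:Z + q).
    by apply: (first (P' 0%N)); lia.
  by apply: (stairM 0); lia.
-
  have [hs|hs] := lerP (P' 0%N) (al%:Z); last first.
    by apply: (first (P' 0%N)); lia.
  have [hs2|hs2] := ltrP (P' 0%N) (al%:Z + q - N).
    by apply: (first (P' 0%N + N)); lia.
  have [hr|hr] := lerP (al%:Z + q - 1) (R + c * N); first by apply: stairP; lia.
  have [hr2|hr2] := lerP (R + c * N) (al%:Z); first by apply: (stairM (-1)); lia.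
  have ht : ((2 * m - 3).+1 < 2 * m - 1)%N by lia.
  have e23 : (2 * m - 3).+1 = (2 * m - 2)%N by lia.
  have hlen3 := g_len hg' (t := (2 * m - 3)%N) ltac:(lia).
  have hend := g_end hg' (t := (2 * m - 3)%N) ltac:(lia).
  have := hst _ ht. rewrite e23 hR' hL'.
  case=> [[e1 [e2 e3]]|[e1 [e2 e3]]].
  + case: hend => hend.
    * apply: (nb' _ ht). rewrite e23 e1 hend. apply: (@qbad _ _ _ _ _ _ _ (R + c * N)); [lia|lia|].
      right; split; [apply: (@congE _ _ _ (-1))|apply: cong0']; lia.
    * apply: (nb' _ ht). rewrite e23 e1 hend. apply: (@qbad _ _ _ _ _ _ _ (R + c * N - 1)); [lia|lia|].
      left; split; apply: cong0'; lia.
  + case: hend => hend.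
    * apply: (nb' _ ht). rewrite e23 e1 hend. apply: (@qbad _ _ _ _ _ _ _ (R + c * N + 1)); [lia|lia|].
      right; split; apply: (@congE _ _ _ (-1)); lia.
    * apply: (nb' _ ht). rewrite e23 e1 hend. apply: (@qbad _ _ _ _ _ _ _ (R + c * N)); [lia|lia|].
      left; split; [apply: cong0'|apply: (@congE _ _ _ (-1))]; lia.
Qed.


Lemma res_win (N Q z : int) : 0 < N -> 0 <= z - Q * N < N + N ->
  (res N z)%:Z = z - Q * N \/ (res N z)%:Z = z - Q * N - N.
Proof.
move=> hN h. have -> : res N z = res N (z - Q * N).
  transitivity (res N ((z - Q * N) + Q * N)); first by congr res; lia.
  by rewrite res_shift.
have [h1|h1] := ltrP (z - Q * N) N.
- left. apply: res_small; lia.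
- right. rewrite res_small2; lia.
Qed.

Lemma sides (N a b c d : int) : 0 < N -> a < c -> c < b -> b < d -> d < a + N ->
  ((minn (res N a) (res N b) < res N c < maxn (res N a) (res N b))
   != (minn (res N a) (res N b) < res N d < maxn (res N a) (res N b)))%N.
Proof.
move=> hN h1 h2 h3 h4.
have ha := res_decomp a hN. set Q := (a %/ N)%Z in ha.
have hra := res_lt a hN.
have hb := res_win (N:=N) (Q:=Q) (z:=b) hN ltac:(have := res_lt a hN; lia).
have hc := res_win (N:=N) (Q:=Q) (z:=c) hN ltac:(have := res_lt a hN; lia).
have hd := res_win (N:=N) (Q:=Q) (z:=d) hN ltac:(have := res_lt a hN; lia).
have hrb := res_lt b hN. have hrc := res_lt c hN. have hrd := res_lt d hN.
move: hb hc hd. set Qn := Q * N in ha *. lia.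
Qed.

Lemma ivt (f : nat -> bool) i j : (i <= j)%N -> f i != f j ->
  exists k, (i <= k < j)%N /\ f k != f k.+1.
Proof.
elim: j => [|j IH] hij hf; first by rewrite leqn0 in hij; move/eqP: hij hf => ->; rewrite eqxx.
case: (ltngtP i j.+1) hij => // [hlt|heq] _; last by rewrite heq eqxx in hf.
have [e|ne] := eqVneq (f i) (f j).
- exists j. rewrite -e hf. split => //. lia.
- have [k [hk1 hk2]] := IH ltac:(lia) ne. exists k. split => //. lia.
Qed.

Lemma pp_mem (T : eqType) (x0 : T) (p : seq T) k : (k.+1 < size p)%N ->
  (nth x0 p k, nth x0 p k.+1) \in zip p (behead p).
Proof.
elim: p k => [|x p IH] k //=. case: p IH => [|y p] IH //= hk.
case: k hk => [|k] hk; first by rewrite inE eqxx.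
rewrite inE; apply/orP; right. exact: (IH k).
Qed.

Lemma pp_nth (T : eqType) (x0 : T) (p : seq T) e : e \in zip p (behead p) ->
  exists k, (k.+1 < size p)%N /\ e = (nth x0 p k, nth x0 p k.+1).
Proof.
elim: p e => [|x p IH] e //=. case: p IH => [|y p] IH //=.
rewrite inE => /orP [/eqP ->|H]; first by exists 0%N.
have [k [hk ->]] := IH e H. exists k.+1. split => //.
Qed.

Fixpoint st (N : int) (v : nat -> nat) (t : nat) : int * int * int :=
  match t with
  | 0 => ((v 0%N)%:Z, (v 0%N)%:Z, (v 0%N)%:Z)
  | t'.+1 => let: (P, lo, hi) := st N v t' in
             if res N (hi + 1) == v t then (hi + 1, lo, hi + 1) else (lo - 1, lo - 1, hi)
  end.

Definition stP N v t := (st N v t).1.1.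
Definition stL N v t := (st N v t).1.2.
Definition stH N v t := (st N v t).2.

Lemma st_growth N v Nn : growth Nn (stP N v) (stL N v) (stH N v).
Proof.
split => //. move=> t _. rewrite /stP /stL /stH /=.
case: (st N v t) => [[P lo] hi] /=. case: ifP => _ /=; [left|right]; lia.
Qed.

Lemma st_stepR N v t : res N (stH N v t + 1) = v t.+1 -> stP N v t.+1 = stH N v t + 1.
Proof.
rewrite /stP /stH /=. case: (st N v t) => [[P lo] hi] /= ->. by rewrite eqxx.
Qed.

Lemma st_stepL N v t : res N (stH N v t + 1) <> v t.+1 -> stP N v t.+1 = stL N v t - 1.
Proof.
rewrite /stP /stH /stL /=. case: (st N v t) => [[P lo] hi] /= H.
by case: eqP.
Qed.

Lemma all_in n (p : seq 'I_n.+1) : uniq p -> size p = n.+1 -> forall x, x \in p.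
Proof.
move=> hu hs x. have hc : #|p| = #|'I_n.+1| by rewrite card_ord; move/card_uniqP: hu => ->.
have := subset_cardP hc (subset_predT _). move=> /(_ _) H. by rewrite (H _).
Qed.

Lemma shp_lift n (p : seq 'I_n.+1) : SHP p ->
  exists P lo hi, growth n.+1 P lo hi /\
    forall t, (t < n.+1)%N -> res n.+1%:Z (P t) = nth ord0 p t.
Proof.
move=> /and3P [hu /eqP hs hnc].
set Ni := n.+1%:Z. have hN : 0 < Ni by rewrite /Ni; lia.
pose v t := nat_of_ord (nth ord0 p t).
have hv : forall t, (v t < n.+1)%N by move=> t; exact: ltn_ord.
exists (stP Ni v), (stL Ni v), (stH Ni v). split; first exact: st_growth.
have hg : growth n.+1 (stP Ni v) (stL Ni v) (stH Ni v) := st_growth Ni v n.+1.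
set P := stP Ni v in hg *. set lo := stL Ni v in hg *. set hi := stH Ni v in hg *.
have vinj : forall i j, (i < n.+1)%N -> (j < n.+1)%N -> v i = v j -> i = j.
  move=> i j hi' hj' e. apply/eqP. rewrite -(nth_uniq ord0 (s:=p)) ?hs //. apply/eqP. exact: val_inj.
have cover : forall t, (t < n.+1)%N -> forall y, lo t <= y <= hi t -> exists i, (i <= t)%N /\ P i = y.
  case: hg => h0 h1 hst. elim=> [|t IH] ht y hy; first by exists 0%N; split => //; lia.
  have [hin|hout] : lo t <= y <= hi t \/ ~ (lo t <= y <= hi t) by lia.
    have [i [hi1 hi2]] := IH (ltnW ht) y hin. exists i; split => //; lia.
  exists t.+1; split => //. case: (hst t ht); lia.
suff H : forall t, (t < n.+1)%N -> forall i, (i <= t)%N -> res Ni (P i) = v i.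
  move=> t ht. exact: (H t ht t (leqnn t)).
elim=> [|t IH] ht i hi'.
  rewrite leqn0 in hi'. move/eqP: hi' => ->. rewrite /P /stP /=.
  have h2 : (res Ni (v 0%N)%:Z)%:Z = (v 0%N)%:Z by apply: res_small; have := hv 0%N; lia.
  lia.
case: (ltngtP i t.+1) hi' => // [hlt|->] _; first by apply: IH; lia.
have IH' := IH (ltnW ht).
have hlen := g_len hg (t:=t) (ltnW ht).
have hend := g_end hg (t:=t) (ltnW ht).
have [E|E] := eqVneq (res Ni (hi t + 1)) (v t.+1).
  by rewrite /P (st_stepR E).
have hPt : P t.+1 = lo t - 1 by rewrite /P (st_stepL (elimN eqP E)).
rewrite hPt.
have [y0 [hy1 hy2 hy3]] := res_lift (N:=Ni) (lo t) (x:=v t.+1) hN ltac:(have := hv t.+1; lia).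
have hy4 : hi t < y0.
  have [//|H] := ltrP (hi t) y0. exfalso.
  have [i0 [hi1 hi2]] := cover t (ltnW ht) y0 ltac:(lia).
  have := IH' i0 hi1. rewrite hi2 hy3 => /esym /vinj. move=> /(_ ltac:(lia) ht). lia.
have [e1|ne1] := eqVneq y0 (hi t + 1); first by rewrite -e1 hy3 eqxx in E.
have [e2|ne2] := eqVneq y0 (lo t + Ni - 1).
  by rewrite -hy3 e2 -(res_shift _ _ 1) mul1r; congr res; lia.
exfalso.
set a' := P t. set c' := hi t + 1. set d' := lo t + Ni - 1.
have hrc := res_lt c' hN. have hrd := res_lt d' hN.
pose xc : 'I_n.+1 := inord (res Ni c'). pose xd : 'I_n.+1 := inord (res Ni d').
have vxc : nat_of_ord xc = res Ni c' by rewrite /xc inordK //; lia.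
have vxd : nat_of_ord xd = res Ni d' by rewrite /xd inordK //; lia.
set jc := index xc p. set jd := index xd p.
have hjc : (jc < n.+1)%N by rewrite -hs index_mem all_in.
have hjd : (jd < n.+1)%N by rewrite -hs index_mem all_in.
have vjc : v jc = res Ni c' by rewrite /v /jc nth_index ?all_in.
have vjd : v jd = res Ni d' by rewrite /v /jd nth_index ?all_in.
have hvt : res Ni (P t) = v t := IH' t (leqnn t).
have far : forall j z, (j < n.+1)%N -> v j = res Ni z -> hi t < z < lo t + Ni -> z != y0 -> (t.+1 < j)%N.
  move=> j z hj e hz hzy. rewrite ltnNge; apply/negP => hjt.
  case: (ltngtP j t.+1) hjt => // [hlt|heq] _.
  - have := IH' j ltac:(lia). rewrite e => /esym /res_eq_win H.
    have := g_in hg (i:=j) (t:=t) ltac:(lia) (ltnW ht). move=> hin.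
    have := H hN ltac:(lia) ltac:(lia). lia.
  - move: e. rewrite heq -hy3 => /res_eq_win /(_ ltac:(lia) ltac:(lia)) H.
    move: hzy; rewrite H; lia.
have hjc2 : (t.+1 < jc)%N.
  apply: (far jc c' hjc vjc); first by lia. by rewrite eq_sym.
have hjd2 : (t.+1 < jd)%N.
  apply: (far jd d' hjd vjd); first by lia. by rewrite eq_sym.
have hside := sides hN (a:=a') (b:=y0) (c:=c') (d:=d') ltac:(lia) ltac:(lia) ltac:(lia) ltac:(lia).
rewrite hy3 /a' hvt -vjc -vjd in hside.
pose f k := (minn (v t) (v t.+1) < v k < maxn (v t) (v t.+1))%N.
have [k [hk1 hk2]] : exists k, (t.+1 < k)%N /\ (k.+1 < n.+1)%N /\ f k != f k.+1.
  case: (ltngtP jc jd) => hcd.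
  - have [k [hk1 hk2]] := ivt (f := f) (ltnW hcd) hside. exists k. split; [lia|split; [lia|done]].
  - have [k [hk1 hk2]] := ivt (f := f) (ltnW hcd) ltac:(by rewrite eq_sym). exists k. split; [lia|split; [lia|done]].
  - move: hside. by rewrite hcd eqxx.
case: hk2 => hk2 hk3.
have pp1 := pp_mem ord0 (p:=p) (k:=t) ltac:(rewrite hs; lia).
have pp2 := pp_mem ord0 (p:=p) (k:=k) ltac:(rewrite hs; lia).
have := allP hnc _ pp1 => /= /allP /(_ _ pp2) /=.
rewrite /cross /=. apply/negP. rewrite negbK. apply/andP; split; last exact: hk3.
rewrite !inE !negb_or !(nth_uniq ord0) ?hs //; lia.
Qed.


Lemma vmodE n z : vmod n z = inord (res n.+1%:Z z).
Proof. by []. Qed.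

Lemma vmod_val n z : nat_of_ord (vmod n z) = res n.+1%:Z z.
Proof. rewrite vmodE inordK //. have := @res_lt n.+1%:Z z ltac:(lia). lia. Qed.

Lemma vmod_shift n z c : vmod n (z + c * n.+1%:Z) = vmod n z.
Proof. by rewrite !vmodE res_shift. Qed.

Lemma vmod_cong n x a k : cong n.+1%:Z (x + - k) a -> vmod n x = vmod n (a + k).
Proof.
move=> [c h]. have -> : x = a + k + c * n.+1%:Z by lia. by rewrite vmod_shift.
Qed.

Lemma seg_eq n x y a b k : hitp n.+1%:Z (x + - k) (y + - k) a b ->
  [set vmod n x; vmod n y] = seg n (a + k) (b + k).
Proof.
rewrite /seg. case=> [[h1 h2]|[h1 h2]].
- by rewrite (vmod_cong h1) (vmod_cong h2).
- by rewrite (vmod_cong h1) (vmod_cong h2) setUC.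
Qed.

Lemma bad_mem m k al de ep xi x y : (2 <= m)%N ->
  bad m al de ep xi (x + - k) (y + - k) ->
  [set vmod (2 * m - 2) x; vmod (2 * m - 2) y] \in classA_set m k al de ep xi.
Proof.
move=> hm. rewrite /bad /classA_set.
have eN : (2 * m - 1)%N%:Z = (2 * m - 2).+1%:Z by lia.
rewrite eN. set n := (2 * m - 2)%N.
rewrite inE !mem_cat.
case=> [[j [h1 [h2 h3]]]|[[i [h1 h2]]|[j [h1 h2]]]].
- apply/orP; left. apply/mapP. exists (absz j).
    rewrite mem_iota. lia.
  rewrite (seg_eq h3). congr seg; lia.
- apply/orP; right; apply/orP; left. apply/mapP. exists i.
    rewrite mem_iota. lia.
  by rewrite (seg_eq h2).
- apply/orP; right; apply/orP; right. apply/mapP. exists j.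
    rewrite mem_iota. lia.
  by rewrite (seg_eq h2).
Qed.

Lemma classA_hits m (hm : (2 <= m)%N) (B : {set {set 'I_(2 * m - 2).+1}}) :
  classA B -> hits_all_SHP B.
Proof.
move=> [k [al [de [ep [xi [[h1 h2 h3] [h4 h5 h6 hB]]]]]]] p hp.
have hca : CA m al de ep xi.
  split; [split|split] => //.
  - move=> i hi. have [_ ? ?] := h4 i hi. lia.
  - move=> j hj. have [_ ? ?] := h5 j hj. lia.
have [P [lo [hi [hg hres]]]] := shp_lift hp.
have eN : (2 * m - 2).+1 = (2 * m - 1)%N by lia.
rewrite eN in hg.
case: (boolP [exists e, (e \in path_edges p) && (e \in B)]).
  by move=> /existsP [e /andP [he1 he2]]; exists e.
move=> hne. exfalso.
apply: (core hm hca (growth_shift (- k) hg)) => t ht hbad.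
move/negP: hne; apply. apply/existsP.
exists [set nth ord0 p t; nth ord0 p t.+1]. apply/andP; split.
- rewrite /path_edges inE. apply/mapP.
  exists (nth ord0 p t, nth ord0 p t.+1) => //.
  apply: pp_mem. move: hp => /and3P [_ /eqP -> _]. lia.
- have e1 : nth ord0 p t = vmod (2 * m - 2) (P t).
    apply: val_inj. rewrite /= vmod_val. rewrite hres //. lia.
  have e2 : nth ord0 p t.+1 = vmod (2 * m - 2) (P t.+1).
    apply: val_inj. rewrite /= vmod_val hres //. lia.
  rewrite e1 e2 hB. exact: bad_mem hbad.
Qed.


Lemma mulN_cases2 (N d : int) : 0 < N ->
  d * N = 0 \/ d * N = N \/ d * N = - N \/ N + N <= d * N \/ d * N <= - (N + N).
Proof.
move=> hN. have [h|[h|h]] : d <= -2 \/ (-1 <= d <= 1) \/ 2 <= d by lia.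
- right; right; right; right. have H : 2 * N <= (-d) * N by rewrite ler_pM2r //; lia.
  rewrite mulNr in H. lia.
- have [->|[->|->]] : d = -1 \/ d = 0 \/ d = 1 by lia.
  + right; right; left. by rewrite mulN1r.
  + left. by rewrite mul0r.
  + right; left. by rewrite mul1r.
- right; right; right; left. have H : 2 * N <= d * N by rewrite ler_pM2r //; lia.
  lia.
Qed.

Definition zz (t : nat) : int := if odd t then (t.+1./2)%:Z else - (t./2)%:Z.

Lemma zz_sum t : zz t + zz t.+1 = (if odd t then 0 else 1).
Proof.
rewrite /zz /=. have := odd_double_half t. case: (odd t) => /= h; lia.
Qed.

Lemma zz_bound m t : (t < 2 * m - 1)%N -> - (m%:Z - 1) <= zz t <= m%:Z - 1.
Proof. rewrite /zz. have := odd_double_half t. case: (odd t) => /= h; lia. Qed.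

Lemma zz_inj t t' : zz t = zz t' -> t = t'.
Proof.
rewrite /zz. have := odd_double_half t. have := odd_double_half t'.
case: (odd t); case: (odd t') => /= h1 h2; lia.
Qed.

Definition zig n (c : 'I_n.+1) : seq 'I_n.+1 := mkseq (fun t => vmod n (c%:Z + zz t)) n.+1.

Lemma zig_nth n (c : 'I_n.+1) t : (t < n.+1)%N -> nth ord0 (zig c) t = vmod n (c%:Z + zz t).
Proof. move=> ht. by rewrite /zig nth_mkseq. Qed.

Lemma noncross_par (N : int) (a b c d : nat) (j E : int) : 0 < N ->
  a%:Z < N -> b%:Z < N -> c%:Z < N -> d%:Z < N ->
  a != c -> a != d -> b != c -> b != d -> a != b -> c != d ->
  -1 <= j <= 1 -> (a%:Z + b%:Z) - (c%:Z + d%:Z) = j + E * N ->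
  ((minn a b < c < maxn a b) = (minn a b < d < maxn a b))%N.
Proof.
move=> hN ha hb hc hd h1 h2 h3 h4 h5 h6 hj he.
case: (mulN_cases2 E hN) => [hE|[hE|[hE|[hE|hE]]]]; lia.
Qed.

Lemma zig_res n (c : 'I_n.+1) t : (t < n.+1)%N ->
  nat_of_ord (nth ord0 (zig c) t) = res n.+1%:Z (c%:Z + zz t).
Proof. move=> ht. by rewrite zig_nth // vmod_val. Qed.

Lemma zig_SHP m (hm : (2 <= m)%N) (c : 'I_(2 * m - 2).+1) : SHP (zig c).
Proof.
set n := (2 * m - 2)%N in c *.
have hN : 0 < n.+1%:Z by lia.
have hNm : n.+1%:Z = 2 * m%:Z - 1 by rewrite /n; lia.
have hsz : size (zig c) = n.+1 by rewrite size_mkseq.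
apply/and3P; split.
- rewrite /zig /mkseq map_inj_in_uniq ?iota_uniq // => t t' ht ht' e.
  move: ht ht'; rewrite !mem_iota /= => ht ht'.
  have e' : res n.+1%:Z (c%:Z + zz t) = res n.+1%:Z (c%:Z + zz t').
    by rewrite -!vmod_val e.
  have := zz_bound (m:=m) (t:=t) ltac:(lia). have := zz_bound (m:=m) (t:=t') ltac:(lia).
  move=> b1 b2. apply: zz_inj.
  have := res_eq_win hN e' ltac:(lia) ltac:(lia). lia.
- by rewrite hsz.
- apply/allP => e he. apply/allP => f hf.
  have [k [hk ->]] := pp_nth ord0 he. have [l [hl ->]] := pp_nth ord0 hf.
  rewrite hsz in hk hl.
  rewrite /cross /=.
  set a0 := nth ord0 (zig c) k. set b0 := nth ord0 (zig c) k.+1.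
  set c0 := nth ord0 (zig c) l. set d0 := nth ord0 (zig c) l.+1.
  have ea : nat_of_ord a0 = res n.+1%:Z (c%:Z + zz k) by rewrite zig_res //; lia.
  have eb : nat_of_ord b0 = res n.+1%:Z (c%:Z + zz k.+1) by rewrite zig_res //; lia.
  have ec : nat_of_ord c0 = res n.+1%:Z (c%:Z + zz l) by rewrite zig_res //; lia.
  have ed : nat_of_ord d0 = res n.+1%:Z (c%:Z + zz l.+1) by rewrite zig_res //; lia.
  apply/negP => /andP [hu hne].
  move: hu hne. rewrite /= !inE !negb_or -!val_eqE /= ea eb ec ed.
  move=> /and4P [/and3P [u1 u2 u3] /andP [u4 u5] u6 _] hne.
  have ra := res_decomp (c%:Z + zz k) hN.
  have rb := res_decomp (c%:Z + zz k.+1) hN.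
  have rc := res_decomp (c%:Z + zz l) hN.
  have rd := res_decomp (c%:Z + zz l.+1) hN.
  have sk := zz_sum k. have sl := zz_sum l.
  pose js : int := (if odd k then 0 else 1) - (if odd l then 0 else 1).
  have j1 : -1 <= js <= 1 by rewrite /js; case: (odd k); case: (odd l).
  have hjs : zz k + zz k.+1 - (zz l + zz l.+1) = js by rewrite sk sl.
  set A := res _ (c%:Z + zz k) in u1 u2 u3 hne ra.
  set Bv := res _ (c%:Z + zz k.+1) in u4 u5 u1 u2 u3 hne rb.
  set Cv := res _ (c%:Z + zz l) in u4 u6 u2 hne rc.
  set Dv := res _ (c%:Z + zz l.+1) in u5 u6 u3 hne rd.
  have := @noncross_par n.+1%:Z A Bv Cv Dv _
     (((c%:Z + zz l) %/ n.+1%:Z)%Z + ((c%:Z + zz l.+1) %/ n.+1%:Z)%Z - ((c%:Z + zz k) %/ n.+1%:Z)%Z - ((c%:Z + zz k.+1) %/ n.+1%:Z)%Z)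
     hN (res_lt _ hN) (res_lt _ hN) (res_lt _ hN) (res_lt _ hN) u2 u3 u4 u5 u1 u6 j1.
  move=> H. suff /H E : (A%:Z + Bv%:Z) - (Cv%:Z + Dv%:Z) = js +
     (((c%:Z + zz l) %/ n.+1%:Z)%Z + ((c%:Z + zz l.+1) %/ n.+1%:Z)%Z - ((c%:Z + zz k) %/ n.+1%:Z)%Z - ((c%:Z + zz k.+1) %/ n.+1%:Z)%Z) * n.+1%:Z.
    by rewrite E eqxx in hne.
  clear -ra rb rc rd hjs. lia.
Qed.

Lemma zig_edge n (c : 'I_n.+1) e : e \in path_edges (zig c) ->
  exists k, (k < n)%N /\ e = [set vmod n (c%:Z + zz k); vmod n (c%:Z + zz k.+1)].
Proof.
rewrite /path_edges inE => /mapP [pr hpr ->].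
have [k [hk ->]] := pp_nth ord0 hpr. rewrite size_mkseq in hk.
exists k; split; first by lia. by rewrite !zig_nth //; lia.
Qed.

Lemma set2_sum N (x1 y1 x2 y2 : 'I_N) : x1 != y1 -> [set x1; y1] = [set x2; y2] ->
  (nat_of_ord x1 + nat_of_ord y1 = nat_of_ord x2 + nat_of_ord y2)%N.
Proof.
move=> hne e.
have h1 : x1 \in [set x2; y2] by rewrite -e !inE eqxx.
have h2 : y1 \in [set x2; y2] by rewrite -e !inE eqxx orbT.
move: h1 h2; rewrite !inE => /orP [/eqP e1|/eqP e1] /orP [/eqP e2|/eqP e2].
- by move: hne; rewrite e1 e2 eqxx.
- by rewrite e1 e2.
- by rewrite e1 e2 addnC.
- by move: hne; rewrite e1 e2 eqxx.
Qed.

Lemma zig_count m (hm : (2 <= m)%N) (e : {set 'I_(2 * m - 2).+1}) :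
  (\sum_(c < (2 * m - 2).+1) (e \in path_edges (zig c)) <= 2)%N.
Proof.
set n := (2 * m - 2)%N in e *.
have hN : 0 < n.+1%:Z by lia.
rewrite (eq_bigr (fun c => if e \in path_edges (zig c) then 1 else 0)%N); last first.
  by move=> c _; case: (e \in path_edges (zig c)).
rewrite -big_mkcond sum1dep_card.
pose phi (c : 'I_n.+1) := [exists k : 'I_n, (e == [set vmod n (c%:Z + zz k); vmod n (c%:Z + zz k.+1)]) && odd k].
have key : forall c, e \in path_edges (zig c) -> exists k, [/\ (k < n)%N,
    e = [set vmod n (c%:Z + zz k); vmod n (c%:Z + zz k.+1)] & odd k = phi c].
  move=> c hc. case hp: (phi c).
  - move/existsP: hp => [k /andP [/eqP he hk]]. exists k; split => //.
  - have [k [hk he]] := zig_edge hc. exists k; split => //.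
    apply/negP => hodd.
    have : phi c by apply/existsP; exists (Ordinal hk); rewrite /= he eqxx hodd.
    by rewrite hp.
have distinct : forall (c : 'I_n.+1) k, (k < n)%N -> vmod n (c%:Z + zz k) != vmod n (c%:Z + zz k.+1).
  move=> c k hk. apply/negP => /eqP H.
  have e' : res n.+1%:Z (c%:Z + zz k) = res n.+1%:Z (c%:Z + zz k.+1) by rewrite -!vmod_val H.
  have := zz_bound (m:=m) (t:=k) ltac:(lia). have := zz_bound (m:=m) (t:=k.+1) ltac:(lia).
  move=> b1 b2. have := res_eq_win hN e' ltac:(lia) ltac:(lia). move=> /addrI /zz_inj. lia.
have := @leq_card_in _ _ phi [set c | e \in path_edges (zig c)].
rewrite card_bool. apply. move=> c1 c2 hc1 hc2 hphi.
have {}hc1 : e \in path_edges (zig c1) by move: hc1; rewrite in_set.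
have {}hc2 : e \in path_edges (zig c2) by move: hc2; rewrite in_set.
have [k1 [hk1 he1 ho1]] := key c1 hc1. have [k2 [hk2 he2 ho2]] := key c2 hc2.
have hs := set2_sum (distinct c1 k1 hk1) (etrans (esym he1) he2).
rewrite !vmod_val in hs.
have s1 := zz_sum k1. have s2 := zz_sum k2.
have ho : odd k1 = odd k2 by rewrite ho1 ho2 hphi.
have ra := res_decomp (c1%:Z + zz k1) hN.
have rb := res_decomp (c1%:Z + zz k1.+1) hN.
have rc := res_decomp (c2%:Z + zz k2) hN.
have rd := res_decomp (c2%:Z + zz k2.+1) hN.
have hsum : zz k1 + zz k1.+1 = zz k2 + zz k2.+1 by rewrite s1 s2 ho.
set E := ((c1%:Z + zz k1) %/ n.+1%:Z)%Z + ((c1%:Z + zz k1.+1) %/ n.+1%:Z)%Z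
         - ((c2%:Z + zz k2) %/ n.+1%:Z)%Z - ((c2%:Z + zz k2.+1) %/ n.+1%:Z)%Z.
have hE : 2 * (c1%:Z - c2%:Z) = E * n.+1%:Z.
  clear -ra rb rc rd hsum hs. rewrite /E. lia.
have hc1' := ltn_ord c1. have hc2' := ltn_ord c2.
apply: val_inj => /=.
have := mulN_cases2 E hN. rewrite -hE. clear -hc1' hc2'. rewrite /n in hc1' hc2' *. lia.
Qed.

Lemma lower m (hm : (2 <= m)%N) (B' : {set {set 'I_(2 * m - 2).+1}}) :
  hits_all_SHP B' -> (m <= #|B'|)%N.
Proof.
move=> hB. set n := (2 * m - 2)%N in B' hB *.
have H1 : (n.+1 <= \sum_(c < n.+1) \sum_(e in B') (e \in path_edges (zig c)))%N.
  have Hs : (\sum_(c < n.+1) 1 = n.+1)%N by rewrite sum_nat_const card_ord muln1.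
  rewrite -[X in (X <= _)%N]Hs.
  apply: leq_sum => c _.
  have [e he1 he2] := hB _ (zig_SHP hm c).
  by rewrite (bigD1 e) //= he1.
rewrite exchange_big /= in H1.
have H2 : (\sum_(e in B') \sum_(c < n.+1) (e \in path_edges (zig c)) <= \sum_(e in B') 2)%N.
  apply: leq_sum => e _. exact: zig_count.
have := leq_trans H1 H2. rewrite sum_nat_const /n. lia.
Qed.


Lemma seg_card2 n (a b : int) : 1 <= b - a <= n%:Z -> #|seg n a b| = 2%N.
Proof.
move=> h. rewrite /seg cards2. case: eqP => // e. exfalso.
have hN : 0 < n.+1%:Z by lia.
have e' : res n.+1%:Z a = res n.+1%:Z b by rewrite -!vmod_val e.
have := res_eq_win hN e' ltac:(lia) ltac:(lia). lia.
Qed.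

Lemma classA_edge m (hm : (2 <= m)%N) (B : {set {set 'I_(2 * m - 2).+1}}) :
  classA B -> edge_set B.
Proof.
move=> [k [al [de [ep [xi [[h1 h2 h3] [h4 h5 h6 ->]]]]]]] e.
rewrite /classA_set inE !mem_cat => /orP [|/orP []] /mapP [j hj ->]; rewrite mem_iota in hj.
- apply: seg_card2. lia.
- apply: seg_card2. have [? ? ?] := h4 j ltac:(lia). lia.
- apply: seg_card2. have [? ? ?] := h5 j ltac:(lia). lia.
Qed.

Lemma classA_card m (hm : (2 <= m)%N) (B : {set {set 'I_(2 * m - 2).+1}}) :
  classA B -> (#|B| <= m)%N.
Proof.
move=> [k [al [de [ep [xi [[h1 h2 h3] [h4 h5 h6 ->]]]]]]].
rewrite /classA_set cardsE. apply: (leq_trans (card_size _)).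
rewrite !size_cat !size_map !size_iota. lia.
Qed.

Local Close Scope ring_scope.

Theorem theorem1 (m : nat) (hm : (2 <= m)%N) (B : {set {set 'I_(2 * m - 2).+1}}) :
  classA B -> blocker B.
Proof.
move=> hA. split.
- exact: classA_edge hA.
- exact: classA_hits hA.
- move=> B' _ hB'. apply: leq_trans (classA_card hm hA) (lower hm hB').
Qed.
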